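(* Let $K$ be a number field, $L/K$ a (possibly infinite) Galois extension in which every element of $\operatorname{Gal}(L/K)$ has finite order, and $E/K$ an elliptic curve. Let $q$ be an odd prime power with $E(L)[q]\cong\mathbb{Z}/q\mathbb{Z}$. For $\sigma\in\operatorname{Gal}(L/K)$ let $\operatorname{ord}(\sigma)$ be its order, and let $\phi$ be Euler's totient function. (1) If $\gcd(\phi(q),\operatorname{ord}(\sigma))=1$ for all $\sigma\in\operatorname{Gal}(L/K)$, then $E(L)[q]=E(K)[q]$. (2) If $\gcd(\phi(q),\operatorname{ord}(\sigma))\le 2$ for all $\sigma\in\operatorname{Gal}(L/K)$, then there is $d\in K$ with $\sqrt d\in L$ such that $E(L)[q]\cong E_d(L)[q]=E_d(K)[q]$.
   Context: $E(F)[q]$ denotes the $q$-torsion points of $E$ defined over $F$ (points killed by $q$). $E_d$ denotes the quadratic twist of $E$ by $d$. *)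

(* Defs.v *)
(* Everything (number field K, Galois extension L, curve
   points) lives inside algC, the algebraic closure of Q. *)
From mathcomp Require Import all_boot all_order all_algebra all_field.
Set Implicit Arguments. Unset Strict Implicit. Unset Printing Implicit Defensive.
Import GRing.Theory Num.Theory.
Local Open Scope ring_scope.

Definition is_subfield (F : algC -> Prop) : Prop :=
  F 0 /\ F 1 /\
  (forall x y, F x -> F y -> F (x + y)) /\
  (forall x, F x -> F (- x)) /\
  (forall x y, F x -> F y -> F (x * y)) /\
  (forall x, F x -> F x^-1).

Definition number_field (K : algC -> Prop) : Prop :=
  is_subfield K /\
  exists (n : nat) (s : 'I_n -> algC), forall x, K x <->
     exists c : 'I_n -> rat, x = \sum_(i < n) ratr (c i) * s i.

(* L/K is a (possibly infinite) Galois extension inside algC = Qbar: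
   K <= L are subfields and L is stable under every automorphism of Qbar
   fixing K (normality; algebraicity and separability are automatic). *)
Definition galois_ext (K L : algC -> Prop) : Prop :=
  [/\ is_subfield K, is_subfield L, (forall x, K x -> L x) &
      forall tau : {rmorphism algC -> algC},
        (forall x, K x -> tau x = x) -> forall x, L x -> L (tau x)].

(* sigma (a function on algC, considered only on L) is an element of
   Gal(L/K): a field automorphism of L fixing K pointwise. *)
Definition in_gal (K L : algC -> Prop) (sigma : algC -> algC) : Prop :=
  (forall x, L x -> L (sigma x)) /\
  (forall y, L y -> exists2 x, L x & sigma x = y) /\
  (forall x y, L x -> L y -> sigma (x + y) = sigma x + sigma y) /\
  (forall x y, L x -> L y -> sigma (x * y) = sigma x * sigma y) /\
  sigma 1 = 1 /\
  (forall x, K x -> sigma x = x).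

Definition gal_order (L : algC -> Prop) (sigma : algC -> algC) (n : nat) : Prop :=
  [/\ (0 < n)%N, (forall x, L x -> iter n sigma x = x) &
      forall m, (0 < m < n)%N -> exists2 x, L x & iter m sigma x <> x].

Definition odd_prime_power (q : nat) : Prop :=
  exists p k, [/\ prime p, odd p, (0 < k)%N & q = (p ^ k)%N].

(* Elliptic curves in short Weierstrass form y^2 = x^3 + a x + b
   (char 0, so every elliptic curve over K has such a model). *)
Record ecurve := ECurve { ec_a : algC; ec_b : algC }.

Definition elliptic_over (K : algC -> Prop) (E : ecurve) : Prop :=
  [/\ K (ec_a E), K (ec_b E) & 4 * ec_a E ^+ 3 + 27 * ec_b E ^+ 2 != 0].

(* Projective points: None is the point at infinity O. *)
Definition point := option (algC * algC).

Definition on_curve (E : ecurve) (P : point) : Prop :=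
  match P with
  | None => True
  | Some (x, y) => y ^+ 2 = x ^+ 3 + ec_a E * x + ec_b E
  end.

Definition ec_add (E : ecurve) (P Q : point) : point :=
  match P, Q with
  | None, _ => Q
  | _, None => P
  | Some (x1, y1), Some (x2, y2) =>
      if x1 == x2 then
        if y1 == - y2 then None
        else let l := (3 * x1 ^+ 2 + ec_a E) / (2 * y1) in
             let x3 := l ^+ 2 - x1 - x2 in
             Some (x3, l * (x1 - x3) - y1)
      else let l := (y2 - y1) / (x2 - x1) in
           let x3 := l ^+ 2 - x1 - x2 in
           Some (x3, l * (x1 - x3) - y1)
  end.

Definition ec_mul (E : ecurve) (n : nat) (P : point) : point :=
  iter n (ec_add E P) None.

(* Quadratic twist E_d : y^2 = x^3 + d^2 a x + d^3 b  (~ d y^2 = x^3+ax+b). *)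
Definition twist (E : ecurve) (d : algC) : ecurve :=
  ECurve (d ^+ 2 * ec_a E) (d ^+ 3 * ec_b E).

Definition pt_over (F : algC -> Prop) (P : point) : Prop :=
  match P with None => True | Some (x, y) => F x /\ F y end.

Definition tors (E : ecurve) (F : algC -> Prop) (q : nat) (P : point) : Prop :=
  [/\ on_curve E P, pt_over F P & ec_mul E q P = None].

Definition iso_Zq (E : ecurve) (G : point -> Prop) (q : nat) : Prop :=
  exists f : 'Z_q -> point,
    [/\ injective f, (forall P, G P <-> exists i, f i = P) &
        forall i j, f (i + j) = ec_add E (f i) (f j)].

Definition group_iso (E1 : ecurve) (G1 : point -> Prop)
    (E2 : ecurve) (G2 : point -> Prop) : Prop :=
  exists h : point -> point,
    [/\ (forall P, G1 P -> G2 (h P)),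
        (forall P Q, G1 P -> G1 Q -> h P = h Q -> P = Q),
        (forall R, G2 R -> exists2 P, G1 P & h P = R) &
        (forall P Q, G1 P -> G1 Q -> h (ec_add E1 P Q) = ec_add E2 (h P) (h Q))].

(* Main.v *)
Require Import Defs.
From HB Require Import structures.
From mathcomp Require Import all_boot all_order all_algebra all_field all_fingroup all_solvable.
From mathcomp Require Import zify ring.
From Stdlib Require Import Classical.
Import GRing.Theory Num.Theory FinRing.Theory.
Local Open Scope ring_scope.

Lemma gal_moves (Qr : splittingFieldType rat) (K0 : {subfield Qr}) (xx : Qr) :
  xx \notin K0 -> exists phi : {rmorphism Qr -> Qr},
    (forall y, y \in K0 -> phi y = y) /\ phi xx != xx.
Proof.
move=> Kx.
have galK : galois K0 {:Qr}.
  apply/and3P; split; first exact: subvf.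
    apply/separableP=> y _; apply: pcharf0_separable.
    by move=> p; rewrite (pchar_lalg Qr) pchar_num.
  apply/splitting_normalField; first exact: subvf.
  have [p Fp Sp] := splittingFieldP Qr.
  exists p; first by apply: polyOverSv Fp; apply: sub1v.
  by apply: splittingFieldForS Sp; [apply: sub1v | apply: subvf].
have: xx \notin fixedField ('Gal({:Qr} / K0))%g by rewrite (galois_fixedField galK).
move=> H; have {}H : ~ (forall g, g \in ('Gal({:Qr} / K0))%g -> g xx = xx).
  by move=> H'; move/negP: H; apply; apply/(fixedFieldP (memvf xx)).
case: (boolP [exists g in ('Gal({:Qr} / K0))%g, g xx != xx]) => [/exists_inP[g Gg gx]|/exists_inPn H2]; last first.
  by exfalso; apply: H => g Gg; apply/eqP; move: (H2 g Gg); rewrite negbK.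
exists (gal_repr g : {rmorphism Qr -> Qr}); split=> //.
by move=> y Ky; apply: (fixed_gal (subvf K0) Gg Ky).
Qed.

Lemma algC_aut_moves (K : algC -> Prop) (x : algC) :
  number_field K -> ~ K x ->
  exists nu : {rmorphism algC -> algC}, (forall y, K y -> nu y = y) /\ nu x != x.
Proof.
move=> [[K0 [K1 [KD [KN [KM KI]]]]] [n [s Ks]]] nKx.
pose S := x :: [seq s i | i <- enum 'I_n].
pose mp y := sval (minCpolyP y).
pose pQ := \prod_(y <- S) mp y.
have mon_pQ : pQ \is monic.
  by apply: monic_prod => y _; rewrite /mp; case: (minCpolyP y) => ? [].
have DpQ : map_poly ratr pQ = \prod_(y <- S) minCpoly y :> {poly algC}.
  rewrite rmorph_prod; apply: eq_bigr => y _.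
  by rewrite /mp; case: (minCpolyP y) => ? [].
have [r Dr] := closed_field_poly_normal (map_poly ratr pQ : {poly algC}).
rewrite lead_coef_map (monicP mon_pQ) rmorph1 scale1r in Dr.
have rS : forall y, y \in S -> y \in r.
  move=> y Sy; rewrite -root_prod_XsubC -Dr DpQ.
  rewrite (big_rem y Sy) /= rootM root_minCpoly //.
have [Qr [QrC [rr Drr genQr]]] := num_field_exists r.
have pre : forall y, y \in S -> {yy | QrC yy = y}.
  move=> y /rS; rewrite -Drr => /mapP/sig2_eqW[yy _ ->]; by exists yy.
have Sinj_poly (p : {poly rat}) :
    map_poly QrC (map_poly (in_alg Qr) p) = map_poly ratr p.
  rewrite -map_poly_comp; apply: eq_map_poly => a.
  by rewrite /= rmorphZ_num rmorph1 mulr1.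
pose pr := map_poly (in_alg Qr) pQ.
have ax : splitting_field_axiom Qr.
  exists pr.
    by apply/polyOverP=> i; rewrite coef_map memvZ ?memv_line.
  exists rr => //.
  congr (_ %= _): (eqpxx pr); apply/(map_poly_inj QrC).
  rewrite Sinj_poly Dr -Drr big_map rmorph_prod /=; apply: eq_bigr => zz _.
  by rewrite map_polyXsubC.
pose QrS : splittingFieldType rat :=
  HB.pack (FieldExt.sort Qr) (FieldExt_isSplittingField.Build _ Qr ax).
have Sx : x \in S by rewrite inE eqxx.
have Ss : forall i, s i \in S.
  by move=> i; rewrite inE; apply/orP; right; apply: map_f; rewrite mem_enum.
pose ss i := sval (pre _ (Ss i)).
have Dss i : QrC (ss i) = s i by rewrite /ss; case: (pre _ _).
pose X := [tuple (ss i : QrS) | i < n].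
pose V : {vspace QrS} := <<X>>%VS.
have KV : forall y, K y -> exists2 yy, yy \in V & QrC yy = y.
  move=> y /Ks [c ->]; exists (\sum_(i < n) c i *: (ss i : QrS)).
    apply: memv_suml => i _; apply: memvZ; apply: memv_span.
    by rewrite -[ss i](tnth_mktuple ss) mem_tnth.
  rewrite rmorph_sum; apply: eq_bigr => i _.
  by rewrite (rmorphZ_num QrC) Dss.
have VK : forall yy, yy \in V -> K (QrC yy).
  move=> yy /coord_span ->; apply/Ks; exists (fun i => coord X i yy).
  rewrite rmorph_sum; apply: eq_bigr => i _.
  by rewrite (rmorphZ_num QrC) -tnth_nth tnth_mktuple Dss.
have isaV : is_aspace V.
  rewrite /is_aspace has_algid1.
    apply/prodvP=> u v Vu Vv.
    have [w Vw Dw] := KV (QrC u * QrC v) (KM _ _ (VK _ Vu) (VK _ Vv)).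
    suff -> : u * v = w by [].
    by apply: (fmorph_inj QrC); rewrite rmorphM Dw.
  have [w Vw Dw] := KV 1 K1.
  suff -> : (1 : QrS) = w by [].
  by apply: (fmorph_inj QrC); rewrite rmorph1 Dw.
pose xx : QrS := sval (pre x Sx).
have Dxx : QrC xx = x by rewrite /xx; case: (pre x Sx).
have nVx : xx \notin (ASpace isaV : {subfield QrS}).
  by apply/negP => /VK; rewrite Dxx.
have [phi [phiK phix]] := @gal_moves QrS _ _ nVx.
have [nu Dnu] := extend_algC_subfield_aut (QrC : {rmorphism QrS -> algC}) phi.
exists nu; split.
  move=> y /KV [yy Vyy <-]; rewrite -Dnu phiK //.
by rewrite -Dxx -Dnu (inj_eq (fmorph_inj QrC)).
Qed.

Lemma aut_orbit (nu : {rmorphism algC -> algC}) (y : algC) :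
  exists2 m, (0 < m)%N & iter m nu y = y.
Proof.
have [pq [Dp monq] _] := minCpolyP y.
have [rs Drs] := closed_field_poly_normal (minCpoly y).
have nz : minCpoly y != 0 by rewrite Dp map_poly_eq0 monic_neq0.
have rootit : forall i, iter i nu y \in rs.
  have rt : forall i, root (minCpoly y) (iter i nu y).
    elim=> [|i IH] /=; first exact: root_minCpoly.
    move: IH; rewrite Dp => /rootP H; apply/rootP.
    have := congr1 nu H; rewrite rmorph0 -horner_map /= => <-.
    congr (_.[_]); rewrite -map_poly_comp; apply: eq_map_poly => a /=.
    by rewrite fmorph_rat.
  move=> i; have := rt i; rewrite Drs rootZ ?lead_coef_eq0 //.
  by rewrite root_prod_XsubC.
pose F (i : 'I_(size rs).+1) : 'I_(size rs) := Ordinal (etrans (index_mem _ _) (rootit i)).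
have : ~~ injectiveb F.
  apply/negP => /injectiveP /leq_card; rewrite !card_ord ltnn //.
move/injectivePn => [i [j ij Fij]].
have Eij : iter i nu y = iter j nu y.
  have := congr1 val Fij => /= /(congr1 (nth 0 rs)).
  by rewrite !nth_index.
have iterD : forall a b, iter (a + b) nu y = iter a nu (iter b nu y) by move=> a b; rewrite iterD.
have iter_inj : forall a, injective (iter a nu).
  elim=> [|a IH] //= u v /fmorph_inj; exact: IH.
wlog lt : i j ij Fij Eij / (i < j)%N.
  move=> W; case: (ltngtP i j) => [h|h|h]; first exact: (W i j).
    by apply: (W j i) => //; rewrite eq_sym.
  by move: ij; rewrite (val_inj h) eqxx.
exists (j - i)%N; first by rewrite subn_gt0.
apply: (iter_inj i); rewrite -iterD addnC subnK ?(ltnW lt) //.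
Qed.

Lemma aut_in_gal (K L : algC -> Prop) (nu : {rmorphism algC -> algC}) :
  galois_ext K L -> (forall y, K y -> nu y = y) -> in_gal K L nu.
Proof.
move=> [_ _ _ Lst] nuK.
have LL : forall i x, L x -> L (iter i nu x).
  by elim=> [|i IH] x Lx //=; apply: Lst => //; apply: IH.
split; first by move=> x; apply: Lst.
split.
  move=> y Ly; have [m m0 Hm] := aut_orbit nu y.
  exists (iter m.-1 nu y); first exact: LL.
  by rewrite -iterS prednK.
split; first by move=> x y _ _; rewrite rmorphD.
split; first by move=> x y _ _; rewrite rmorphM.
by split; [rewrite rmorph1|].
Qed.

Lemma Zq_pow_gcd (q : nat) (k : 'Z_q) (n : nat) :
  (1 < q)%N -> (0 < n)%N -> k ^+ n = 1 -> k ^+ gcdn (totient q) n = 1.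
Proof.
move=> q1 n0 kn.
have Uk : k \is a GRing.unit.
  apply/unitrPr; exists (k ^+ n.-1); by rewrite -exprS prednK.
pose u := FinRing.unit 'Z_q Uk.
have un : (u ^+ n)%g = 1%g by apply: val_inj; rewrite val_unitX /= kn.
have uc : (u ^+ totient q)%g = 1%g.
  rewrite -card_units_Zp ?(ltnW q1) //; apply: expg_cardG.
  by rewrite /units_Zp inE.
have : (#[u]%g %| gcdn (totient q) n)%N.
  by rewrite dvdn_gcd !order_dvdn un uc !eqxx.
rewrite order_dvdn => /eqP ug.
by have := congr1 val ug; rewrite val_unitX.
Qed.

Lemma Zq_sq1 (p e : nat) (k : 'Z_(p ^ e)) :
  prime p -> odd p -> (0 < e)%N -> k * k = 1 -> k = 1 \/ k = -1.
Proof.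
move=> pp op e0 kk1.
have p3 : (2 < p)%N.
  have := prime_gt1 pp; case: p pp op {k kk1} => [|[|[|p]]] //.
have q1 : (1 < p ^ e)%N.
  have : (p ^ 1 <= p ^ e)%N by apply: leq_pexp2l; [exact: prime_gt0 | exact: e0].
  rewrite expn1; lia.
set q := (p ^ e)%N in k kk1 q1 *.
have qc : (Zp_trunc q).+2 = q by rewrite Zp_cast.
pose m := (k : nat).
have km : k = m%:R by rewrite natr_Zp.
have mq : (m < q)%N by rewrite -[X in (_ < X)%N]qc ltn_ord.
have mm : (m * m == 1 %[mod q])%N.
  have H : ((m * m)%:R = 1%:R :> 'Z_q) by rewrite natrM -km kk1.
  by have := congr1 (@nat_of_ord _) H; rewrite !(val_Zp_nat q1) => ->.
have m0 : (0 < m)%N.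
  case: m mm {km mq} => //; rewrite mod0n modn_small //.
have dv : (q %| (m - 1) * (m + 1))%N.
  rewrite eqn_mod_dvd in mm; last by lia.
  have -> : ((m - 1) * (m + 1) = m * m - 1)%N by nia.
  done.
have [c1|c2] : coprime q (m + 1) \/ coprime q (m - 1).
  rewrite /q; case: (boolP (p %| m + 1)%N) => h1.
    right; apply: coprimeXl; rewrite prime_coprime //; apply/negP => h2.
    have : (p %| (m + 1) - (m - 1))%N by rewrite dvdn_sub.
    have -> : ((m + 1) - (m - 1) = 2)%N by lia.
    move/dvdn_leq => /(_ isT); lia.
  by left; apply: coprimeXl; rewrite prime_coprime.
  rewrite Gauss_dvdl // in dv.
  left; have m1 : (m = 1)%N.
    case: (posnP (m - 1)) => h; first lia.
    by have := dvdn_leq h dv; lia.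
  by rewrite km m1.
rewrite Gauss_dvdr // in dv.
right; have m1 : (m + 1 = q)%N.
  have : (0 < m + 1)%N by lia.
  by move=> h; have := dvdn_leq h dv; lia.
have q0 : (q%:R : 'Z_q) = 0.
  by apply: ord_inj; rewrite (val_Zp_nat q1) modnn.
apply/eqP; rewrite -addr_eq0 km -(natrD _ m 1) m1 q0 //.
Qed.

Definition ptmap (nu : algC -> algC) (P : point) : point :=
  match P with None => None | Some (x, y) => Some (nu x, nu y) end.

Lemma ptmap_add (E : ecurve) (nu : {rmorphism algC -> algC}) :
  nu (ec_a E) = ec_a E -> forall P Q,
  ptmap nu (ec_add E P Q) = ec_add E (ptmap nu P) (ptmap nu Q).
Proof.
move=> na [[x1 y1]|] [[x2 y2]|] //=.
rewrite (inj_eq (fmorph_inj nu)) -rmorphN (inj_eq (fmorph_inj nu)).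
case: ifP => _; last first.
  by rewrite /= !(rmorphB, rmorphM, fmorphV, rmorphXn).
case: ifP => _ //=.
by rewrite !(rmorphB, rmorphM, fmorphV, rmorphXn, rmorphD, na) ?rmorph1.
Qed.

Lemma ptmap_mul (E : ecurve) (nu : {rmorphism algC -> algC}) :
  nu (ec_a E) = ec_a E -> forall n P,
  ptmap nu (ec_mul E n P) = ec_mul E n (ptmap nu P).
Proof.
move=> na; elim=> [|n IH] P //=.
by rewrite /ec_mul /= -/(ec_mul E n P) ptmap_add // IH.
Qed.

Lemma ptmap_curve (E : ecurve) (nu : {rmorphism algC -> algC}) :
  nu (ec_a E) = ec_a E -> nu (ec_b E) = ec_b E -> forall P,
  on_curve E P -> on_curve E (ptmap nu P).
Proof.
move=> na nb [[x y]|] //= H.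
by rewrite -rmorphXn H !(rmorphD, rmorphM, rmorphXn) na nb.
Qed.

Definition hmap (c : algC) (P : point) : point :=
  match P with None => None | Some (x, y) => Some (c ^+ 2 * x, c ^+ 3 * y) end.

Lemma hmap_add (E : ecurve) (c : algC) : c != 0 -> forall P Q,
  hmap c (ec_add E P Q) = ec_add (twist E (c ^+ 2)) (hmap c P) (hmap c Q).
Proof.
move=> c0 [[x1 y1]|] [[x2 y2]|] //; case: E => a b.
have c2 : c ^+ 2 != 0 by rewrite expf_neq0.
have c3 : c ^+ 3 != 0 by rewrite expf_neq0.
rewrite /ec_add /hmap /twist /=.
rewrite (inj_eq (mulfI c2)) -mulrN (inj_eq (mulfI c3)).
case: ifP => hx; last first.
  have hx' : x2 - x1 != 0 by rewrite subr_eq0 eq_sym hx.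
  set l := (y2 - y1) / (x2 - x1).
  have -> : (c ^+ 3 * y2 - c ^+ 3 * y1) / (c ^+ 2 * x2 - c ^+ 2 * x1) = c * l.
    by rewrite /l; field; rewrite hx' /= -mulrBr mulf_neq0.
  congr Some; congr pair; ring.
case: ifP => hy //.
set l := (3 * x1 ^+ 2 + a) / (2 * y1).
have -> : (3 * (c ^+ 2 * x1) ^+ 2 + c ^+ 2 ^+ 2 * a) / (2 * (c ^+ 3 * y1)) = c * l.
  rewrite /l; have [->|y0] := eqVneq y1 0; first by rewrite !(mulr0, invr0).
  have two : (2 : algC) != 0 by rewrite pnatr_eq0.
  by field; rewrite y0 c0.
congr Some; congr pair; ring.
Qed.

Lemma fixedK (K : algC -> Prop) (x : algC) : number_field K ->
  (forall nu : {rmorphism algC -> algC}, (forall y, K y -> nu y = y) -> nu x = x) -> K x.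
Proof.
move=> HK H; case: (classic (K x)) => // nKx.
have [nu [nuK nux]] := @algC_aut_moves K x HK nKx.
by move: nux; rewrite H ?eqxx.
Qed.

Lemma ec_mul_None (E : ecurve) n : ec_mul E n None = None.
Proof. by elim: n => //= n IH; rewrite /ec_mul /= -/(ec_mul E n None) IH. Qed.

Lemma tors_None E L q : tors E L q None.
Proof. by split=> //; apply: ec_mul_None. Qed.

Lemma iter_ptmap (nu : algC -> algC) m x y :
  iter m (ptmap nu) (Some (x, y)) = Some (iter m nu x, iter m nu y).
Proof. by elim: m => //= m ->. Qed.


Lemma f0 (L : algC -> Prop) (E : ecurve) (q : nat) (f : 'Z_q -> point) (fsurj : forall P, tors E L q P <-> exists i, f i = P) (fhom : forall i j, f (i + j) = ec_add E (f i) (f j)) : f 0 = None.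
Proof.
have [i fi] := (fsurj None).1 (tors_None E L q).
by have := fhom i 0; rewrite addr0 fi.
Qed.

Lemma ftors (L : algC -> Prop) (E : ecurve) (q : nat) (f : 'Z_q -> point) (fsurj : forall P, tors E L q P <-> exists i, f i = P) i : tors E L q (f i).
Proof. by apply/fsurj; exists i. Qed.

Lemma k_exists (K : algC -> Prop) (L : algC -> Prop) (E : ecurve) (q : nat) (f : 'Z_q -> point) (HG : galois_ext K L) (Ka : K (ec_a E)) (Kb : K (ec_b E)) (fsurj : forall P, tors E L q P <-> exists i, f i = P) (fhom : forall i j, f (i + j) = ec_add E (f i) (f j)) (nu : {rmorphism algC -> algC}) : (forall y, K y -> nu y = y) ->
  exists k, forall i, ptmap nu (f i) = f (k * i).
Proof.
move=> nuK; have na := nuK _ Ka; have nb := nuK _ Kb.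
case: HG => _ _ _ Lst.
have [k fk] : exists k, f k = ptmap nu (f 1).
  apply/fsurj; have [c1 p1 m1] := @ftors L E q f fsurj 1; split.
  - exact: ptmap_curve.
  - by move: (f 1) p1 => [[x y]|] //= [Lx Ly]; split; apply: Lst.
  - by rewrite -ptmap_mul // m1.
exists k => i; rewrite -(natr_Zp i).
elim: (nat_of_ord i) => [|n IH]; first by rewrite mulr0 (@f0 L E q f fsurj fhom).
rewrite -addn1 natrD mulrDr mulr1 fhom ptmap_add // IH -fk fhom //.
Qed.

Lemma k_order (L : algC -> Prop) (E : ecurve) (q : nat) (f : 'Z_q -> point) (finj : injective f) (fsurj : forall P, tors E L q P <-> exists i, f i = P) (nu : {rmorphism algC -> algC}) n k :
  (forall i, ptmap nu (f i) = f (k * i)) -> gal_order L nu n -> k ^+ n = 1.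
Proof.
move=> Hk [n0 Hn _].
have It : forall m i, iter m (ptmap nu) (f i) = f (k ^+ m * i).
  elim=> [|m IH] i /=; first by rewrite expr0 mul1r.
  by rewrite IH Hk mulrA -exprS.
have : iter n (ptmap nu) (f 1) = f 1.
  have [_ p1 _] := @ftors L E q f fsurj 1; move: (f 1) p1 => [[x y]|] /=.
    by move=> [Lx Ly]; rewrite iter_ptmap !Hn.
  by move=> _; elim: (n) => //= m ->.
by rewrite It mulr1 => /finj.
Qed.

Lemma neg_f (L : algC -> Prop) (E : ecurve) (q : nat) (f : 'Z_q -> point) (fsurj : forall P, tors E L q P <-> exists i, f i = P) (fhom : forall i j, f (i + j) = ec_add E (f i) (f j)) i x y : f i = Some (x, y) -> f (- i) = Some (x, - y).
Proof.
move=> fi; have := fhom (- i) i; rewrite addNr (@f0 L E q f fsurj fhom) fi.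
case: (f (- i)) => [[x' y']|] //=.
case: ifP => [/eqP -> | //]; case: ifP => [/eqP -> | //].
by [].
Qed.


Lemma f1_some (L : algC -> Prop) (E : ecurve) (q : nat) (f : 'Z_q -> point) (q1 : (1 < q)%N) (finj : injective f) (fsurj : forall P, tors E L q P <-> exists i, f i = P) (fhom : forall i j, f (i + j) = ec_add E (f i) (f j)) (qodd : odd q) : exists x c, f 1 = Some (x, c) /\ c != 0.
Proof.
case E1: (f 1) => [[x c]|]; last first.
  by move: E1; rewrite -(@f0 L E q f fsurj fhom) => /finj /eqP; rewrite oner_eq0.
exists x, c; split => //; apply/negP => /eqP c0.
have := fhom 1 1; rewrite E1 c0 /= eqxx oppr0 eqxx -(@f0 L E q f fsurj fhom) => /finj H.
have q3 : (2 < q)%N by move: q1 qodd; case: (q) => [|[|[|]]].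
have := congr1 (@nat_of_ord _) H.
rewrite -[1 + 1]/(2%:R : 'Z_q) (val_Zp_nat q1) modn_small //.
Qed.



Lemma hmap_mul E c n P : c != 0 ->
  hmap c (ec_mul E n P) = ec_mul (twist E (c ^+ 2)) n (hmap c P).
Proof.
move=> c0; elim: n => //= n IH.
by rewrite /ec_mul /= -/(ec_mul E n P) -/(ec_mul _ n (hmap c P)) hmap_add // IH.
Qed.

Lemma hmap_curve E c P : c != 0 ->
  on_curve (twist E (c ^+ 2)) (hmap c P) <-> on_curve E P.
Proof.
move=> c0; case: P => [[x y]|] //; case: E => a b.
have c6 : c ^+ 6 != 0 by rewrite expf_neq0.
rewrite /on_curve /hmap /twist /ec_a /ec_b.
have e1 : (c ^+ 3 * y) ^+ 2 = c ^+ 6 * y ^+ 2 by ring.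
have e2 : (c ^+ 2 * x) ^+ 3 + c ^+ 2 ^+ 2 * a * (c ^+ 2 * x) + c ^+ 2 ^+ 3 * b
     = c ^+ 6 * (x ^+ 3 + a * x + b) by ring.
rewrite e1 e2.
by split=> [/(mulfI c6)|->].
Qed.

Lemma hmap_inj c : c != 0 -> injective (hmap c).
Proof.
move=> c0 [[x1 y1]|] [[x2 y2]|] //= [].
have c2 : c ^+ 2 != 0 by rewrite expf_neq0.
have c3 : c ^+ 3 != 0 by rewrite expf_neq0.
by move=> /(mulfI c2) -> /(mulfI c3) ->.
Qed.

Lemma hmap_onto c R : c != 0 -> exists P, hmap c P = R.
Proof.
move=> c0; case: R => [[X Y]|]; last by exists None.
exists (Some (X / c ^+ 2, Y / c ^+ 3)) => /=.
have c2 : c ^+ 2 != 0 by rewrite expf_neq0.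
have c3 : c ^+ 3 != 0 by rewrite expf_neq0.
by rewrite [c ^+ 2 * _]mulrC [c ^+ 3 * _]mulrC !divfK.
Qed.

Lemma hmap_over (L : algC -> Prop) c P : is_subfield L -> L c -> c != 0 ->
  pt_over L (hmap c P) <-> pt_over L P.
Proof.
move=> [L0 [L1 [LD [LN [LM LI]]]]] Lc c0.
have L2 : L (c ^+ 2) by rewrite expr2; apply: LM.
have L3 : L (c ^+ 3) by rewrite exprS; apply: LM.
have c2 : c ^+ 2 != 0 by rewrite expf_neq0.
have c3 : c ^+ 3 != 0 by rewrite expf_neq0.
case: P => [[x y]|] //=; split=> [[Lx Ly]|[Lx Ly]]; last by split; apply: LM.
have -> : x = (c ^+ 2)^-1 * (c ^+ 2 * x) by rewrite mulKf.
have -> : y = (c ^+ 3)^-1 * (c ^+ 3 * y) by rewrite mulKf.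
by split; apply: LM => //; apply: LI.
Qed.

Lemma hmap_tors E (L : algC -> Prop) q c P : is_subfield L -> L c -> c != 0 ->
  tors (twist E (c ^+ 2)) L q (hmap c P) <-> tors E L q P.
Proof.
move=> HL Lc c0; rewrite /tors -hmap_mul //.
have [h1 h2] := @hmap_curve E c P c0.
have [h3 h4] := @hmap_over L c P HL Lc c0.
split=> [[a b h]|[a b h]]; split; auto.
  by apply: (@hmap_inj c c0); rewrite h.
by rewrite h.
Qed.

Theorem lemma4p1 (K L : algC -> Prop) (E : ecurve) (q : nat) :
  number_field K -> galois_ext K L ->
  (forall sigma, in_gal K L sigma -> exists n, gal_order L sigma n) ->
  elliptic_over K E ->
  odd_prime_power q ->
  iso_Zq E (tors E L q) q ->
  ((forall sigma n, in_gal K L sigma -> gal_order L sigma n ->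
       gcdn (totient q) n = 1%N) ->
     forall P, tors E L q P <-> tors E K q P)
  /\
  ((forall sigma n, in_gal K L sigma -> gal_order L sigma n ->
       (gcdn (totient q) n <= 2)%N) ->
     exists d : algC,
       [/\ K d, d != 0, (exists2 r, L r & r ^+ 2 = d),
           group_iso E (tors E L q) (twist E d) (tors (twist E d) L q) &
           forall P, tors (twist E d) L q P <-> tors (twist E d) K q P]).
Proof.
move=> HK HG Hord [Ka Kb _] [p [e [pp op e0 ->]]] [f [finj fsurj fhom]].
have p3 : (2 < p)%N.
  have := prime_gt1 pp; case: (p) op => [|[|[|]]] //.
have q1 : (1 < p ^ e)%N.
  have : (p ^ 1 <= p ^ e)%N by apply: leq_pexp2l; [exact: prime_gt0 | exact: e0].
  rewrite expn1; lia.
have qodd : odd (p ^ e) by rewrite oddX op orbT.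
have HGc := HG; case: HGc => _ HL KL Lst.
have Hnu : forall nu : {rmorphism algC -> algC}, (forall y, K y -> nu y = y) ->
    exists n (k : 'Z_(p ^ e)), [/\ gal_order L nu n,
      k ^+ gcdn (totient (p ^ e)) n = 1 & forall i, ptmap nu (f i) = f (k * i)].
  move=> nu nuK; have [n Hn] := Hord _ (@aut_in_gal K L nu HG nuK).
  have [k Hk] := @k_exists K L E _ f HG Ka Kb fsurj fhom nu nuK.
  exists n, k; split => //.
  apply: Zq_pow_gcd => //; first by case: Hn.
  exact: @k_order L E _ f finj fsurj nu n k Hk Hn.
have torsKL : forall E' P, tors E' K (p ^ e) P -> tors E' L (p ^ e) P.
  move=> E' [[x y]|] [a b c]; split=> //; case: b => ??; split; exact: KL.
split.
  move=> Hg P; split; last exact: torsKL.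
  move=> tP; have [i fi] := (fsurj P).1 tP.
  case: tP => a b c; split => //.
  move: b; subst P; case E1: (f i) => [[x y]|] // _.
  suff: forall nu : {rmorphism algC -> algC}, (forall y, K y -> nu y = y) ->
     nu x = x /\ nu y = y.
    by move=> H; split; apply: fixedK => // nu nuK; case: (H nu nuK).
  move=> nu nuK; have [n [k [Hn Hk Hf]]] := Hnu nu nuK.
  rewrite (Hg nu n (@aut_in_gal K L nu HG nuK) Hn) expr1 in Hk.
  have := Hf i; rewrite Hk mul1r E1 /=; by case.
move=> Hg2.
have [x1 [c [f1 c0]]] := @f1_some L E _ f q1 finj fsurj fhom qodd.
have Lc : L c by have := @ftors L E _ f fsurj 1; rewrite f1 => -[_ [_ ?] _].
have sign : forall nu : {rmorphism algC -> algC}, (forall y, K y -> nu y = y) ->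
  exists2 eps : algC, eps ^+ 2 = 1 & forall x y, tors E L (p ^ e) (Some (x, y)) ->
     nu x = x /\ nu y = eps * y.
  move=> nu nuK; have [n [k [Hn Hk Hf]]] := Hnu nu nuK.
  have k2 : k * k = 1.
    have g2 := Hg2 nu n (@aut_in_gal K L nu HG nuK) Hn.
    have g0 : (0 < gcdn (totient (p ^ e)) n)%N.
      by rewrite gcdn_gt0 totient_gt0; lia.
    have [g1|g1] : gcdn (totient (p ^ e)) n = 1%N \/ gcdn (totient (p ^ e)) n = 2%N by lia.
      by rewrite g1 expr1 in Hk; rewrite Hk mul1r.
    by move: Hk; rewrite g1 expr2.
  have [kE|kE] := @Zq_sq1 p e k pp op e0 k2; rewrite kE in Hf.
    exists 1; first by rewrite expr1n.
    move=> x y /(fsurj _).1 [i fi]; have := Hf i; rewrite mul1r fi /=.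
    by case=> -> ->; rewrite mul1r.
  exists (-1); first by rewrite sqrrN expr1n.
  move=> x y /(fsurj _).1 [i fi]; have := Hf i; rewrite mulN1r (@neg_f L E _ f fsurj fhom _ _ _ fi) fi /=.
  by case=> -> ->; rewrite mulN1r.
have t1 : tors E L (p ^ e) (Some (x1, c)) by rewrite -f1; apply: (@ftors L E _ f fsurj 1).
have e4 : forall eps : algC, eps ^+ 2 = 1 -> eps ^+ 4 = 1.
  by move=> eps h; rewrite (_ : 4%N = (2 * 2)%N) // exprM h expr1n.
have Ktwist : forall X Y, tors (twist E (c ^+ 2)) L (p ^ e) (Some (X, Y)) -> K X /\ K Y.
  move=> X Y tR; have [P0 hP] := @hmap_onto c (Some (X, Y)) c0.
  move: tR; rewrite -hP => /(@hmap_tors E L (p ^ e) c P0 HL Lc c0).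
  case: P0 hP => [[x y]|] //= [<- <-] tP.
  split; apply: fixedK => // nu nuK; have [eps eps2 Hs] := sign nu nuK;
    have [nx ny] := Hs _ _ tP; have [_ nc] := Hs _ _ t1.
    by rewrite rmorphM rmorphXn nx nc exprMn eps2 mul1r.
  rewrite rmorphM rmorphXn ny nc exprMn.
  have -> : eps ^+ 3 * c ^+ 3 * (eps * y) = eps ^+ 4 * (c ^+ 3 * y) by ring.
  by rewrite e4 // mul1r.
exists (c ^+ 2); split.
- apply: fixedK => // nu nuK; have [eps eps2 Hs] := sign nu nuK.
  have [_ nc] := Hs _ _ t1.
  by rewrite rmorphXn nc exprMn eps2 mul1r.
- by rewrite expf_neq0.
- by exists c.
- exists (hmap c); split.
  + by move=> P tP; apply/(@hmap_tors E L (p ^ e) c P HL Lc c0).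
  + by move=> P Q _ _; apply: hmap_inj.
  + move=> R tR; have [P hP] := @hmap_onto c R c0; exists P => //.
    by apply/(@hmap_tors E L (p ^ e) c P HL Lc c0); rewrite hP.
  + by move=> P Q _ _; apply: hmap_add.
- move=> P; split; last exact: torsKL.
  case: P => [[X Y]|] tR; last exact: tors_None.
  have [KX KY] := Ktwist X Y tR.
  by case: tR => a b m; split.
Qed.
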